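(* Let $A = \langle \Sigma, Q, q_0, \tau, \phi\rangle$ be an NFA, let $\Psi : Q \to \tilde{Q}$ be a merge operation producing the NFA $\tilde{A} = \langle \Sigma, \tilde{Q}, \tilde{q}_0, \tilde{\tau}, \tilde{\phi}\rangle$, and let $Q^{\mathrm{r}}$ and $\tilde{Q}^{\mathrm{r}}$ be the sets of recurrent states of $A$ and $\tilde{A}$, respectively. If $Q^{\mathrm{r}}$ consists of a single closed communicating class, then $\Psi(Q^{\mathrm{r}}) \subseteq \tilde{Q}^{\mathrm{r}}$.
   Context: An NFA $A = \langle \Sigma, Q, q_0, \tau, \phi\rangle$ has finite alphabet $\Sigma$, finite state set $Q$, initial state $q_0$, transition function $\tau : Q\times\Sigma \to 2^Q$, termination function $\phi: Q \to \{0,1\}$; $\tau$ extends to strings by $\tau(q,\lambda)=\{q\}$, $\tau(q,x\sigma) = \bigcup_{q'\in\tau(q,x)}\tau(q',\sigma)$, and $\tau_\star(S) = \bigcup_{q\in S, x\in\Sigma^\star}\tau(q,x)$. States $q,q'$ communicate if $q' \in \tau_\star(q)$ and $q\in\tau_\star(q')$; the equivalence classes are communicating classes; a class $Q'$ is closed if $\tau_\star(Q') = Q'$. A state is recurrent if it belongs to some closed communicating class. $\tilde{A}$ is obtained from $A$ by a merge operation $\Psi : Q \to \tilde{Q}$ if $\Psi$ is surjective, $\Psi(q_0) = \tilde{q}_0$, $\phi(q) = \tilde{\phi}(\Psi(q))$ for all $q \in Q$, and for all $q\in Q$, $\sigma \in \Sigma$, $q' \in \tau(q,\sigma)$ implies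 $\Psi(q') \in \tilde{\tau}(\Psi(q),\sigma)$. *)

(* Defs.v *)
From mathcomp Require Import all_boot.
Set Implicit Arguments. Unset Strict Implicit. Unset Printing Implicit Defensive.

Record nfa (S Q : finType) := NFA {
  q0 : Q;
  tau : Q -> S -> {set Q};
  phi : Q -> bool }.

Section NFA.
Variables (S Q : finType) (A : nfa S Q).

(* extension of tau to strings: tau(q, lambda) = {q}, tau(q, x s) = U_{q' in tau(q,x)} tau(q', s) *)
Fixpoint tau_str_rev (q : Q) (w : seq S) : {set Q} :=
  match w with
  | [::] => [set q]
  | s :: w' => \bigcup_(q' in tau_str_rev q w') tau A q' s
  end.
Definition tau_str (q : Q) (w : seq S) : {set Q} := tau_str_rev q (rev w).

Definition reach (q q' : Q) : Prop := exists w : seq S, q' \in tau_str q w.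

Definition tau_star (X : Q -> Prop) : Q -> Prop :=
  fun q' => exists2 q, X q & reach q q'.

Definition communicate (q q' : Q) : Prop := reach q q' /\ reach q' q.

(* sets of states are represented as predicates Q -> Prop; equality of sets is extensional *)
Definition comm_class (q : Q) : Q -> Prop := fun q' => communicate q q'.

Definition is_comm_class (C : Q -> Prop) : Prop :=
  exists q, forall x, C x <-> comm_class q x.

Definition closed_class (C : Q -> Prop) : Prop :=
  is_comm_class C /\ (forall x, tau_star C x <-> C x).

Definition recurrent (q : Q) : Prop :=
  exists C, closed_class C /\ C q.
End NFA.

Definition merge_op (S Q Q' : finType) (A : nfa S Q) (A' : nfa S Q') (Psi : Q -> Q') : Prop :=
  [/\ forall y : Q', exists x, Psi x = y,
      Psi (q0 A) = q0 A',
      forall q, phi A q = phi A' (Psi q) &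
      forall q (s : S) q', q' \in tau A q s -> Psi q' \in tau A' (Psi q) s].

(* Main.v *)
Require Import Defs.
From mathcomp Require Import all_boot.

Section Aux.
Variables (S Q : finType) (A : nfa S Q).

Lemma reach_rev (x y : Q) : reach A x y <-> exists l, y \in tau_str_rev A x l.
Proof.
split=> [[w Hw]|[l Hl]]; first by exists (rev w).
by exists (rev l); rewrite /tau_str revK.
Qed.

Lemma tsr_trans (x y z : Q) l1 l2 :
  y \in tau_str_rev A x l1 -> z \in tau_str_rev A y l2 ->
  z \in tau_str_rev A x (l2 ++ l1).
Proof.
move=> Hy; elim: l2 z => [|s l IH] z /=; first by rewrite inE => /eqP ->.
move/bigcupP=> [q' Hq' Hz]; apply/bigcupP; exists q' => //; exact: IH.
Qed.

Lemma reach_trans (x y z : Q) : reach A x y -> reach A y z -> reach A x z.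
Proof.
move=> /reach_rev [l1 H1] /reach_rev [l2 H2]; apply/reach_rev.
by exists (l2 ++ l1); apply: tsr_trans H1 H2.
Qed.

Lemma reach_refl (x : Q) : reach A x x.
Proof. by exists [::]; rewrite /tau_str /= inE. Qed.

Definition ee : rel Q := fun a b => [exists s, b \in tau A a s].

Lemma reachP (x y : Q) : reach A x y <-> connect ee x y.
Proof.
split.
  move/reach_rev=> [l]; elim: l y => [|s l IH] y /=; first by rewrite inE => /eqP ->.
  move/bigcupP=> [q' Hq' Hy]; apply: connect_trans (IH _ Hq') _.
  apply: connect1; apply/existsP; by exists s.
move/connectP=> [p]; elim: p x => [|a p IH] x /=; first by move=> _ ->; exact: reach_refl.
move/andP=> [/existsP [s Hs] Hp] Hy; apply: reach_trans (IH _ Hp Hy).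
exists [:: s]; rewrite /tau_str /=; apply/bigcupP; exists x => //; by rewrite inE.
Qed.

Lemma exists_bottom (x : Q) :
  exists z, reach A x z /\ forall y, reach A z y -> reach A y z.
Proof.
move: {2}#|[set y | connect ee x y]| (leqnn #|[set y | connect ee x y]|) => n.
elim: n x => [|n IH] x Hn.
  by move: Hn; rewrite leqn0 => /eqP/cards0_eq/setP/(_ x); rewrite !inE connect0.
case: (boolP [forall y, connect ee x y ==> connect ee y x]) => [/forallP H|].
  exists x; split; first exact: reach_refl.
  by move=> y /reachP Hy; apply/reachP; move: (H y); rewrite Hy.
rewrite negb_forall => /existsP [y]; rewrite negb_imply => /andP [Hxy Hyx].
have Hsub : [set u | connect ee y u] \proper [set u | connect ee x u].
  apply/properP; split.
    by apply/subsetP=> u; rewrite !inE; apply: connect_trans.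
  by exists x; rewrite !inE ?connect0 //.
have Hlt := proper_card Hsub.
have Hy' : #|[set u | connect ee y u]| <= n by rewrite -ltnS; apply: leq_trans Hlt Hn.
have [z [Hz1 Hz2]] := IH y Hy'.
exists z; split => //; apply: reach_trans Hz1; exact/reachP.
Qed.
End Aux.
Arguments reach_trans {S Q A x y z}.
Arguments reach_refl {S Q A x}.
Arguments reach_rev {S Q A x y}.
Arguments exists_bottom {S Q} A x.

Theorem lemma4 (S Q Q' : finType) (A : nfa S Q) (A' : nfa S Q') (Psi : Q -> Q') :
  merge_op A A' Psi ->
  (exists C : Q -> Prop, closed_class A C /\ (forall q, recurrent A q <-> C q)) ->
  forall q : Q, recurrent A q -> recurrent A' (Psi q).
Proof.
move=> [Hsurj H0 Hphi Htau] [C [[[q1 HC1] _] HC]] q /HC Cq.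
have Hmap : forall x y, reach A x y -> reach A' (Psi x) (Psi y).
  move=> x y /reach_rev [l]; elim: l y => [|s l IH] y /=.
    by rewrite inE => /eqP ->; exact: reach_refl.
  move/bigcupP=> [q' Hq' Hy]; apply: reach_trans (IH _ Hq') _.
  exists [:: s]; rewrite /tau_str /=; apply/bigcupP; exists (Psi q') => //; first by rewrite inE.
  exact: Htau.
have key : forall y', reach A' y' (Psi q).
  move=> y'; have [x <-] := Hsurj y'; apply: Hmap.
  have [z [Hz1 Hz2]] := exists_bottom A x.
  have Rz : recurrent A z.
    exists (comm_class A z); split; last by split; apply: reach_refl.
    split; first by exists z.
    move=> w; split.
      move=> [c [Hc1 Hc2] Hcw]; have Hzw := reach_trans Hc1 Hcw; by split => //; apply: Hz2.
    by move=> Hw; exists w => //; apply: reach_refl.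
  move/HC: Rz => /HC1 [_ Hzq1]; move/HC1: Cq => [Hq1q _].
  apply: reach_trans Hz1 _; exact: reach_trans Hzq1 Hq1q.
exists (comm_class A' (Psi q)); split; last by split; apply: reach_refl.
split; first by exists (Psi q).
move=> w; split.
  move=> [c [Hc1 Hc2] Hcw]; split; [exact: reach_trans Hc1 Hcw | exact: key].
by move=> Hw; exists w => //; apply: reach_refl.
Qed.
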